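(* Let $A$ be a commutative ring, $I$ a proper ideal of $A$, and $R = A \propto A/I$ the trivial ring extension of $A$ by $A/I$. Then the $R$-modules $I \propto A/I$ and $0 \propto A/I$ (ideals of $R$) both have infinite projective dimension over $R$.
   Context: All rings are commutative with identity and all modules are unital. For a ring $A$ and an $A$-module $E$, the trivial ring extension $A \propto E$ is the ring with underlying additive group $A \times E$ and multiplication $(a,e)(a',e') = (aa', ae' + a'e)$. For an ideal $I$ of $A$ and an $A$-submodule $E'$ of $E$ with $IE \subseteq E'$, $I \propto E' = \{(a,e) : a \in I, e \in E'\}$ is an ideal of $A \propto E$. *)

(* Defs.v *)
From HB Require Import structures.
From mathcomp Require Import all_boot all_order all_algebra.
From mathcomp Require Import generic_quotient ring_quotient.

Set Implicit Arguments.
Unset Strict Implicit.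
Unset Printing Implicit Defensive.

Import GRing.Theory.
Local Open Scope ring_scope.

Section TrivExt.
Variables (A : comNzRingType) (E : lmodType A).

Definition triv_ext : Type := (A * E)%type.
HB.instance Definition _ := GRing.Zmodule.on triv_ext.

Definition te_one : triv_ext := (1, 0).
Definition te_mul (x y : triv_ext) : triv_ext :=
  (x.1 * y.1, x.1 *: y.2 + y.1 *: x.2).

Lemma te_mulA : associative te_mul.
Proof.
case=> a e [b f] [c g]; rewrite /te_mul /=; congr pair; first by rewrite mulrA.
rewrite !scalerDr !scalerA addrA; congr (_ + _ + _); by rewrite mulrC.
Qed.

Lemma te_mulC : commutative te_mul.
Proof. by case=> a e [b f]; rewrite /te_mul /= mulrC addrC. Qed.

Lemma te_mul1 : left_id te_one te_mul.
Proof. by case=> a e; rewrite /te_mul /= mul1r scale1r scaler0 addr0. Qed.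

Lemma te_mulDl : left_distributive te_mul +%R.
Proof.
case=> a e [b f] [c g]; rewrite /te_mul /=; congr pair; first by rewrite mulrDl.
rewrite scalerDl scalerDr -!addrA; congr (_ + _); rewrite addrCA; done.
Qed.

Lemma te_one_neq0 : te_one != 0.
Proof. by rewrite /te_one xpair_eqE oner_eq0. Qed.

HB.instance Definition _ := GRing.Zmodule_isComNzRing.Build triv_ext
  te_mulA te_mulC te_mul1 te_mulDl te_one_neq0.

Lemma triv_ext_mulE (x y : triv_ext) :
  x * y = (x.1 * y.1, x.1 *: y.2 + y.1 *: x.2) :> (A * E)%type.
Proof. by []. Qed.

End TrivExt.

Section QuotMod.
Variables (A : comNzRingType) (I : idealr A).

Definition quotmod : Type := {ideal_quot I}.
HB.instance Definition _ := GRing.ComNzRing.on quotmod.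

Definition qscale (a : A) (x : quotmod) : quotmod := (\pi_({ideal_quot I}) a)%qT * x.

Lemma qscaleA a b v : qscale a (qscale b v) = qscale (a * b) v.
Proof. by rewrite /qscale mulrA rmorphM. Qed.

Lemma qscale1 : left_id 1 qscale.
Proof. by move=> v; rewrite /qscale rmorph1 mul1r. Qed.

Lemma qscaleDr : right_distributive qscale +%R.
Proof. by move=> a u v; rewrite /qscale mulrDr. Qed.

Lemma qscaleDl v : {morph qscale^~ v : a b / a + b}.
Proof. by move=> a b; rewrite /qscale rmorphD mulrDl. Qed.

HB.instance Definition _ := GRing.Zmodule_isLmodule.Build A quotmod
  qscaleA qscale1 qscaleDr qscaleDl.

End QuotMod.

Section SubMod.
Variables (R : nzRingType) (V : lmodType R) (S : submodClosed V).

Record submod := SubMod { submod_val :> V; _ : submod_val \in S }.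
HB.instance Definition _ := [isSub for submod_val].
HB.instance Definition _ := [Choice of submod by <:].
HB.instance Definition _ := [SubChoice_isSubLmodule of submod by <:].

End SubMod.

Section Ideals.
Variables (A : comNzRingType) (I : idealr A).

Definition TE := triv_ext (quotmod I).

Definition I_prop_pred : {pred TE^o} := [pred x : TE^o | x.1 \in I].
Definition zero_prop_pred : {pred TE^o} := [pred x : TE^o | x.1 == 0].

Lemma I_prop_closed : subsemimod_closed I_prop_pred.
Proof.
split; first split.
- by rewrite inE /= rpred0.
- by case=> a e [b f]; rewrite !inE /=; exact: rpredD.
- by move=> r [a e]; rewrite !inE /= => Ha; exact: idealMr.
Qed.

Lemma zero_prop_closed : subsemimod_closed zero_prop_pred.
Proof.
split; first split.
- by rewrite inE /=.
- by case=> a e [b f]; rewrite !inE /= => /eqP-> /eqP->; rewrite addr0.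
- by move=> r [a e]; rewrite !inE /= => /eqP->; rewrite mulr0.
Qed.

HB.instance Definition _ := GRing.isSubmodClosed.Build TE TE^o I_prop_pred I_prop_closed.
HB.instance Definition _ := GRing.isSubmodClosed.Build TE TE^o zero_prop_pred zero_prop_closed.

Definition I_prop_mod : lmodType TE := submod I_prop_pred.
Definition zero_prop_mod : lmodType TE := submod zero_prop_pred.

End Ideals.

Section ProjDim.
Variable R : comNzRingType.

Definition projective (P : lmodType R) : Prop :=
  forall (M N : lmodType R) (f : {linear M -> N}) (g : {linear P -> N}),
    (forall y, exists x, f x = y) ->
    exists h : {linear P -> M}, forall x, f (h x) = g x.

Definition exact_at (M N K : lmodType R) (f : M -> N) (g : N -> K) : Prop :=
  forall y, g y = 0 <-> exists x, f x = y.

(* M admits a projective resolution of length <= n: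
   0 -> P_n -> ... -> P_1 -> P_0 -> M -> 0 exact, P_i projective
   (encoded with P_i = 0 for i > n). *)
Definition proj_dim_le (M : lmodType R) (n : nat) : Prop :=
  exists (P : nat -> lmodType R) (d : forall i, {linear P i.+1 -> P i})
         (eps : {linear P 0 -> M}),
    [/\ forall i, projective (P i),
        forall i, (n < i)%N -> forall x : P i, x = 0,
        forall y : M, exists x, eps x = y,
        exact_at (d 0) eps &
        forall i, exact_at (d i.+1) (d i)].

Definition infinite_proj_dim (M : lmodType R) : Prop :=
  forall n, ~ proj_dim_le M n.

End ProjDim.

(* Main.v *)
Require Import Defs.
From HB Require Import structures.
From mathcomp Require Import all_boot all_order all_algebra.
From mathcomp Require Import generic_quotient ring_quotient.
From mathcomp Require Import finmap.
From mathcomp.multinomials Require Import monalg.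

Set Implicit Arguments.
Unset Strict Implicit.
Unset Printing Implicit Defensive.
Import GRing.Theory.
Local Open Scope ring_scope.

Section Main.
Variables (A : comNzRingType) (I : idealr A).
Local Notation R := (TE I).

Definition xx : R := (0 : A, 1 : quotmod I).

Lemma qscaleE (a : A) (e : quotmod I) : a *: e = (\pi_({ideal_quot I}) a)%qT * e.
Proof. by []. Qed.

Lemma pi_eq0 (a : A) : ((\pi_({ideal_quot I}) a)%qT == 0) = (a \in I).
Proof. by rewrite -(rmorph0 (\pi_({ideal_quot I}))%qT) -Quotient.idealrBE subr0. Qed.

Lemma mulE (r s : R) : r * s = (r.1 * s.1, r.1 *: s.2 + s.1 *: r.2) :> (A * quotmod I)%type.
Proof. by []. Qed.

Lemma zeroE : (0 : R) = (0 : A, 0 : quotmod I) :> (A * quotmod I)%type.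
Proof. by []. Qed.

Lemma xxM (c : R) : xx * c = (0 : A, (\pi_({ideal_quot I}) c.1)%qT) :> (A * quotmod I)%type.
Proof. by rewrite mulE /= mul0r scale0r add0r qscaleE mulr1. Qed.

Lemma xxxx : xx * xx = 0.
Proof. by rewrite xxM /= (rmorph0 (\pi_({ideal_quot I}))%qT). Qed.


Definition Jp : pred R := fun r => r.1 \in I.
Definition Ip : pred R := fun r => (r.1 \in I) && (r.2 == 0).

Inductive inS (p : pred R) (M : lmodType R) : M -> Prop :=
| S0 : inS p 0
| Sm (r : R) (m : M) : p r -> inS p (r *: m)
| Sadd (a b : M) : inS p a -> inS p b -> inS p (a + b).

Lemma inS_lin p (M N : lmodType R) (f : {linear M -> N}) m :
  inS p m -> inS p (f m).
Proof.
elim=> [|r m' pr|a b _ Ha _ Hb]; first by rewrite linear0; apply: S0.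
  by rewrite linearZ; apply: Sm.
by rewrite linearD; apply: Sadd.
Qed.

Lemma inS_sum p (M : lmodType R) (T : Type) (s : seq T) (F : T -> M) :
  (forall k, inS p (F k)) -> inS p (\sum_(k <- s) F k).
Proof.
move=> H; elim: s => [|k s IH]; first by rewrite big_nil; apply: S0.
by rewrite big_cons; apply: Sadd.
Qed.

Definition good (M : lmodType R) :=
  (forall q : M, xx *: q = 0 -> inS Jp q) /\
  (forall q : M, inS Ip (xx *: q) -> xx *: q = 0).

Lemma decomp (M : lmodType R) (w : M) : inS Jp w ->
  exists t u, inS Ip t /\ w = t + xx *: u.
Proof.
elim=> [|r m pr|a b _ [t1 [u1 [H1 ->]]] _ [t2 [u2 [H2 ->]]]].
- by exists 0, 0; split; [apply: S0 | rewrite scaler0 addr0].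
- pose c : R := (repr r.2, 0).
  pose i : R := (r.1, 0).
  have Er : r = i + c * xx.
    case: r pr @c @i => a e /= ha; apply/eqP; rewrite xpair_eqE /=.
    rewrite mulr0 addr0 eqxx scaler0 addr0 add0r /= qscaleE mulr1.
    by rewrite reprK.
  exists (i *: m), (c *: m); split; first by apply: Sm; rewrite /Ip /= eqxx andbT.
  by rewrite {1}Er scalerDl scalerA [c * xx]mulrC.
- exists (t1 + t2), (u1 + u2); split; first by apply: Sadd.
  by rewrite scalerDr addrACA.
Qed.

Lemma step (X Y W : lmodType R) (f : {linear Y -> X}) (g : {linear W -> Y}) :
  good Y -> (forall y, f y = 0 <-> exists w, g w = y) ->
  forall z, xx *: z = 0 -> (exists p, f p = z) ->
  ~ (exists w, inS Jp w /\ f w = z) ->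
  exists z', [/\ xx *: z' = 0, (exists w, g w = z') &
                 ~ (exists w, inS Jp w /\ g w = z')].
Proof.
move=> [G1 G2] ex z xz [p fp] nz.
exists (xx *: p); split.
- by rewrite scalerA xxxx scale0r.
- by apply/ex; rewrite linearZ fp.
move=> [w [Jw gw]]; apply: nz.
have [t [u [It Ew]]] := decomp Jw.
have fgu : f (g u) = 0 by apply/ex; exists u.
have xq : xx *: (p - g u) = g t.
  by rewrite scalerDr scalerN -gw Ew linearD linearZ addrK.
have Iq : inS Ip (xx *: (p - g u)) by rewrite xq; apply: inS_lin.
exists (p - g u); split; first by apply: G1; apply: G2.
by rewrite linearB fp fgu subr0.
Qed.

Lemma no_res_gen (M : lmodType R) (m : M) :
  (forall P : lmodType R, projective P -> good P) ->
  xx *: m = 0 -> ~ inS Jp m -> infinite_proj_dim M.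
Proof.
move=> pg xm nm n [P [d [eps [Pp Pz Psurj ex0 exS]]]].
have claim : forall k, exists z : P k, [/\ xx *: z = 0, (exists w, d k w = z) &
                 ~ (exists w, inS Jp w /\ d k w = z)].
  elim=> [|k [z [xz hz nz]]].
    apply: (step (pg _ (Pp 0)) ex0 xm (Psurj m)).
    by move=> [w [Jw ew]]; apply: nm; rewrite -ew; apply: inS_lin.
  exact: (step (pg _ (Pp k.+1)) (exS k) xz hz nz).
have [z [_ _ nz]] := claim n.+1.
apply: nz; exists 0; split; first exact: S0.
by rewrite linear0; symmetry; apply: Pz.
Qed.

Section Free.
Variable (P : lmodType R).
Local Notation F := {malg R[P]}.

Definition sig (g : F) : P := \sum_(k <- msupp g) g@_k *: k.

Lemma sigw g (D : {fset P}) : (msupp g `<=` D)%fset ->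
  sig g = \sum_(k <- D) g@_k *: k.
Proof.
move=> sub; apply: big_fset_incl => // k _ kn.
by rewrite mcoeff_outdom // scale0r.
Qed.

Lemma sig_is_linear : linear sig.
Proof.
move=> a g h; set D := (msupp g `|` msupp h)%fset.
have s1 : (msupp (a *: g + h) `<=` D)%fset.
  apply: fsubset_trans (msuppD_le _ _) _; apply: fsetSU; exact: msuppZ_le.
rewrite (sigw s1) (sigw (fsubsetUl (msupp g) (msupp h))).
rewrite (sigw (fsubsetUr (msupp g) (msupp h))) scaler_sumr -big_split /=.
by apply: eq_bigr => k _; rewrite mcoeffD mcoeffZ scalerDl scalerA.
Qed.

HB.instance Definition _ := GRing.isLinear.Build R F P *:%R sig sig_is_linear.

Lemma sigU (p : P) : sig << 1 *g p >> = p.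
Proof. by rewrite /sig msuppU oner_eq0 big_seq_fset1 mcoeffUU scale1r. Qed.

Lemma monU (c : R) (k : P) : << c *g k >> = c *: << 1 *g k >> :> F.
Proof.
apply/malgP => k'; rewrite mcoeffZ !mcoeffU.
by case: (k == k'); rewrite ?mulr1 ?mulr0.
Qed.

Lemma coefI (h : F) : inS Ip h -> forall k, Ip (h@_k).
Proof.
elim=> [|r m pr|a b _ Ha _ Hb] k.
- by rewrite mcoeff0 /Ip /= rpred0 eqxx.
- rewrite mcoeffZ /Ip mulE /=; move: pr; rewrite /Ip => /andP[r1 /eqP ->].
  rewrite scaler0 addr0 qscaleE mulrC idealMr //=.
  by move: r1; rewrite -pi_eq0 => /eqP ->; rewrite mul0r.
- rewrite mcoeffD; move: (Ha k) (Hb k); rewrite /Ip /=.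
  move=> /andP[a1 /eqP a2] /andP[b1 /eqP b2]; rewrite rpredD //= a2 b2 addr0.
  done.
Qed.

Lemma free_good : good F.
Proof.
split.
- move=> q xq; rewrite (monalgE q); apply: inS_sum => k.
  rewrite monU; apply: Sm.
  have e := xxM (q@_k).
  move: (congr1 (mcoeff k) xq); rewrite mcoeffZ mcoeff0 => h.
  rewrite h zeroE in e; case: e => /esym/eqP; rewrite pi_eq0 //.
- move=> q H; apply/malgP => k; have := coefI H k.
  rewrite mcoeffZ mcoeff0 /Ip xxM /= => /andP[_ /eqP h].
  by rewrite h.
Qed.

End Free.

Lemma proj_good (P : lmodType R) : projective P -> good P.
Proof.
move=> pP.
have [h hh] := pP _ _ (@sig P : {linear _ -> P}) (@idfun P : {linear P -> P})
  (fun y => ex_intro _ _ (sigU y)).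
have [F1 F2] := free_good P.
split.
- move=> q xq; rewrite -[q]hh; apply: inS_lin; apply: F1.
  by rewrite -linearZ xq linear0.
- move=> q Hq.
  have e : xx *: h q = 0 by apply: F2; rewrite -linearZ; apply: inS_lin.
  by have := hh (xx *: q); rewrite /= => <-; rewrite linearZZ e linear0.
Qed.


Lemma sub_inf (S : submodClosed (TE I)^o) :
  (forall v : (TE I)^o, v \in S -> v.1 \in I) -> xx \in S ->
  infinite_proj_dim (submod S).
Proof.
move=> hS Hx.
have key : forall y : submod S, inS Jp y -> (val y).2 = 0.
  move=> y; elim=> [|r m pr|a b _ Ha _ Hb].
  - by rewrite GRing.val0.
  - rewrite GRing.valZ /= !qscaleE.
    have := hS _ (valP m); rewrite -pi_eq0 => /eqP ->.
    by move: pr; rewrite /Jp -pi_eq0 => /eqP ->; rewrite !mul0r addr0.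
  - by rewrite GRing.valD /= Ha Hb addr0.
apply: (@no_res_gen _ (SubMod Hx) proj_good).
- apply: val_inj; rewrite GRing.valZ GRing.val0 /=.
  exact: xxxx.
- by move/key => /= /eqP; rewrite oner_eq0.
Qed.

End Main.

Theorem lemma1p2 (A : comNzRingType) (I : idealr A) :
  infinite_proj_dim (I_prop_mod I) /\ infinite_proj_dim (zero_prop_mod I).
Proof.
split; apply: sub_inf.
- by [].
- by rewrite inE /= rpred0.
- by move=> v; rewrite inE /= => /eqP ->; rewrite rpred0.
- by rewrite inE.
Qed.
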